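(* Let $\mathcal{T}$ be a single-elimination tournament. Then: (i) every $u\in V(\mathcal{T})$ has $P(u)\ne\emptyset$; (ii) for all $u,v\in V(\mathcal{T})$, $P(u)=P(v)$ if and only if $u=v$; (iii) for $u,v\in V(\mathcal{T})$, $P(u)\subseteq P(v)$ if and only if there exists a directed walk from $u$ to $v$; (iv) for all distinct $u,v\in V(\mathcal{T})$, either $P(u)\cap P(v)=\emptyset$, or $P(u)\subsetneq P(v)$, or $P(v)\subsetneq P(u)$; (v) for every match $x\in M(\mathcal{T})$, the sets $\{P(u):u\in N^-(x)\}$ partition $P(x)$, and $P(u)\subsetneq P(x)$ and $P(u)\ne\emptyset$ for all $u\in N^-(x)$.
   Context: A single-elimination tournament is a finite directed graph $\mathcal{T}$ such that: (a) $\mathcal{T}$ has exactly one sink (vertex with no out-neighbours); (b) every non-sink vertex has exactly one out-neighbour; (c) $\mathcal{T}$ has no directed cycles; (d) $|N^-(v)|\ne 1$ for every vertex $v$, where $N^-(v)$ (resp. $N^+(v)$) denotes the set of in-neighbours (resp. out-neighbours) of $v$. The players $P(\mathcal{T})$ are the sources (vertices with no in-neighbours) and the matches are $M(\mathcal{T})=V(\mathcal{T})\setminus P(\mathcal{T})$. A directed walk from $u$ to $v$ is a sequence $(u_1,\dots,u_t)$, $t\ge1$, with $u_1=u$, $u_t=v$ and $u_{i+1}\in N^+(u_i)$ for $1\le i<t$. For a vertex $u$, $P(u)$ is the set of players $a$ for which there is a directed walk from $a$ to $u$. *)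

(* Defs.v *)
From mathcomp Require Import all_boot.
Set Implicit Arguments. Unset Strict Implicit. Unset Printing Implicit Defensive.

Section Tournament.
Variables (T : finType) (e : rel T).

Definition outN (v : T) : {set T} := [set w | e v w].
Definition inN (v : T) : {set T} := [set u | e u v].

(* directed walk (u_1,...,u_t), t >= 1, from u to v: u :: p with
   consecutive vertices joined by arcs and last vertex v *)
Definition dwalk (u v : T) : Prop :=
  exists p : seq T, path e u p /\ last u p = v.

Definition has_dcycle : Prop :=
  exists (u : T) (p : seq T), p != [::] /\ path e u p /\ last u p = u.

Definition is_sink (v : T) : Prop := outN v = set0.

Definition single_elimination_tournament : Prop :=
  [/\ (exists s, is_sink s /\ forall s', is_sink s' -> s' = s),
      (forall v, ~ is_sink v -> #|outN v| = 1),
      ~ has_dcycle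
    & (forall v, #|inN v| <> 1)].

Definition players : {set T} := [set a | inN a == set0].
Definition matches : {set T} := ~: players.

(* P(u) : players a with a directed walk from a to u.  The boolean
   reachability test is MathComp's connect e a u (reflexive-transitive
   closure of e), which reflects dwalk a u (fingraph.connectP). *)
Definition Pl (u : T) : {set T} := [set a in players | connect e a u].

End Tournament.

(* Main.v *)
Require Import Defs.
From mathcomp Require Import all_boot.

Section Helpers.
Variables (T : finType) (e : rel T).
Hypothesis func : forall {u v w}, e u v -> e u w -> v = w.
Hypothesis noloop : forall {x y}, e x y -> connect e y x -> False.
Hypothesis indeg : forall v, #|inN e v| <> 1.

Lemma first_step [a y] : connect e a y -> a != y -> exists2 z, e a z & connect e z y.
Proof.
move=> /connectP [[|z p] /= Hp ->]; first by rewrite eqxx.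
move: Hp => /andP [Haz Hp] _; exists z => //; apply/connectP; by exists p.
Qed.

Lemma last_step [v u] : connect e v u -> v != u -> exists2 w, connect e v w & e w u.
Proof.
move=> /connectP [p Hp ->]; elim: p v Hp => [|y p IH] v /=; first by rewrite eqxx.
move=> /andP [Hvy Hp] Hne.
have [Hyl|Hyl] := eqVneq y (last y p).
  by exists v => //; rewrite -Hyl.
have [w Hyw Hw] := IH y Hp Hyl.
by exists w => //; apply: connect_trans (connect1 Hvy) Hyw.
Qed.

Lemma antisym u v : connect e u v -> connect e v u -> u = v.
Proof.
move=> Huv Hvu; apply/eqP/negPn/negP => Hne.
have [w Huw Hwv] := last_step Huv Hne.
by apply: (noloop Hwv); apply: connect_trans Hvu Huw.
Qed.

Lemma compar [a x y] : connect e a x -> connect e a y -> connect e x y \/ connect e y x.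
Proof.
move=> /connectP [p Hp ->]; elim: p a Hp => [|z p IH] a /=; first by left.
move=> /andP [Haz Hp] Hay.
have [Heq|Hne] := eqVneq a y.
  right; subst y; apply/connectP; by exists (z :: p) => //=; rewrite Haz.
have [z' Hz' Hz'y] := first_step Hay Hne.
have := func Haz Hz'; move=> Ez; subst z'.
by apply: IH.
Qed.

Lemma two_in [a w w' u] : e w u -> e w' u -> w != w' -> connect e a w -> connect e a w' -> False.
Proof.
move=> Hw Hw' Hne Ha Ha'.
wlog H : w w' Hw Hw' Hne Ha Ha' / connect e w w'.
  move=> W; case: (compar Ha Ha') => H; first by apply: (W w w').
  by apply: (W w' w) => //; rewrite eq_sym.
have [z Hz Hzw'] := first_step H Hne.
have := func Hz Hw => Ez; subst z.
exact: (noloop Hw' Hzw').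
Qed.

Lemma Pl_nonempty u : exists a, a \in Pl e u.
Proof.
pose A u := [set a | connect e a u].
move: {2}#|A u| (leqnn #|A u|) => n; elim: n u => [|n IH] u Hn.
  have : u \in A u by rewrite inE connect0.
  by move=> Hu; move: Hn; rewrite leqn0 => /eqP/cards0_eq Hs; rewrite Hs inE in Hu.
have [Hp|Hnp] := boolP (inN e u == set0).
  by exists u; rewrite inE /players inE Hp connect0.
have [w Hw] := set0Pn _ Hnp; rewrite inE in Hw.
have Hpr : A w \proper A u.
  apply/properP; split.
    by apply/subsetP => b; rewrite !inE => Hb; apply: connect_trans Hb (connect1 Hw).
  exists u; first by rewrite inE connect0.
  by rewrite inE; apply/negP => H; apply: (noloop Hw H).
have [a Ha] := IH w (leq_trans (proper_card Hpr) Hn) .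
exists a; move: Ha; rewrite !inE => /andP [-> H] /=.
by apply: connect_trans H (connect1 Hw).
Qed.

Lemma sub_conn u v : Pl e u \subset Pl e v <-> connect e u v.
Proof.
split; last first.
  move=> H; apply/subsetP => a; rewrite !inE => /andP [-> Ha] /=.
  exact: connect_trans Ha H.
move=> /subsetP Hs.
have [a Ha] := Pl_nonempty u.
have Hav := Hs a Ha.
move: Ha Hav; rewrite !inE => /andP [_ Hau] /andP [_ Hav].
case: (compar Hau Hav) => // Hvu.
have [Heq|Hne] := eqVneq v u; first by subst.
have [w Hvw Hwu] := last_step Hvu Hne.
have Hin : #|inN e u| != 1 by apply/eqP.
have Hwin : w \in inN e u by rewrite inE.
have [w' Hw'] : exists w', w' \in inN e u :\ w.
  apply/set0Pn; apply/negP => /eqP H0.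
  move: Hin; have -> : inN e u = [set w].
    apply/eqP; rewrite eqEsubset sub1set Hwin andbT; apply/subsetP => x Hx.
    rewrite inE; apply/negPn/negP => Hxw.
    have Hxx : x \in inN e u :\ w by rewrite in_setD1 Hxw Hx.
    by rewrite H0 inE in Hxx.
  by rewrite cards1.
move: Hw'; rewrite inE => /andP [Hw'w]; rewrite inE => Hw'u.
have [b Hb] := Pl_nonempty w'.
have Hbu : b \in Pl e u.
  move: Hb; rewrite !inE => /andP [-> H] /=; exact: connect_trans H (connect1 Hw'u).
move: (Hs b Hbu); rewrite inE => /andP [_ Hbv].
move: Hb; rewrite inE => /andP [_ Hbw'].
have Hbw : connect e b w by apply: connect_trans Hbv Hvw.
have Hww' : w != w' by move: Hw'w; rewrite inE eq_sym.
case: (two_in Hwu Hw'u Hww' Hbw Hbw').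
Qed.

End Helpers.

Theorem proposition3p3 (T : finType) (e : rel T) :
  single_elimination_tournament e ->
  [/\ (forall u : T, Pl e u != set0),
      (forall u v : T, Pl e u = Pl e v <-> u = v),
      (forall u v : T, Pl e u \subset Pl e v <-> dwalk e u v),
      (forall u v : T, u != v ->
         (Pl e u :&: Pl e v = set0) \/ (Pl e u \proper Pl e v)
           \/ (Pl e v \proper Pl e u))
    & (forall x : T, x \in matches e ->
         partition [set Pl e u | u in inN e x] (Pl e x) /\
         (forall u, u \in inN e x -> Pl e u \proper Pl e x /\ Pl e u != set0))].
Proof.
case=> _ Hout Hcyc Hin.
have func : forall u v w, e u v -> e u w -> v = w.
  move=> u v w Hv Hw.
  have Hns : ~ is_sink e u.
    rewrite /is_sink => H; have Hv' : v \in outN e u by rewrite inE.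
    by rewrite H inE in Hv'.
  have /eqP/cards1P [c Hc] := Hout u Hns.
  have : v \in outN e u by rewrite inE.
  have : w \in outN e u by rewrite inE.
  by rewrite Hc !inE => /eqP -> /eqP ->.
have noloop : forall x y, e x y -> connect e y x -> False.
  move=> x y Hxy /connectP [p Hp Hl]; apply: Hcyc.
  exists x, (y :: p); split; first by [].
  split; first by rewrite /= Hxy Hp.
  by rewrite /= -Hl.
have nonempty : forall u, Pl e u != set0.
  by move=> u; have [a Ha] := Pl_nonempty T e noloop u; apply/set0Pn; exists a.
have dwc : forall u v, dwalk e u v <-> connect e u v.
  move=> u v; split.
    by move=> [p [Hp Hl]]; apply/connectP; exists p.
  by move=> /connectP [p Hp Hl]; exists p.
have antis := antisym T e noloop.
have subc := sub_conn T e func noloop Hin.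
split => //.
- move=> u v; split => [H|->] //.
  by apply: antis; apply/subc; rewrite H.
- move=> u v; split => H.
    by apply/dwc; apply/subc.
  by apply/subc; apply/dwc.
- move=> u v Huv.
  have [H0|/set0Pn [a]] := eqVneq (Pl e u :&: Pl e v) set0; first by left.
  rewrite !inE => /andP [/andP [_ Hau] /andP [_ Hav]].
  right; case: (compar T e func Hau Hav) => H; [left|right];
    rewrite properE; apply/andP; split; try by apply/subc.
  + by apply/negP => /subc H'; move: Huv; rewrite (antis _ _ H H') eqxx.
  + by apply/negP => /subc H'; move: Huv; rewrite (antis _ _ H H') eqxx.
- move=> x Hx.
  have proper_in : forall u, u \in inN e x -> Pl e u \proper Pl e x.
    move=> u; rewrite inE => Hux; rewrite properE; apply/andP; split.
      by apply/subc; apply: connect1.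
    by apply/negP => /subc H; apply: (noloop _ _ Hux H).
  split; last by move=> u Hu; split; [apply: proper_in|apply: nonempty].
  rewrite /partition; apply/and3P; split.
  + rewrite eqEsubset; apply/andP; split.
      apply/subsetP => a /bigcupP [B /imsetP [u Hu ->]] Ha.
      by move/proper_in/proper_sub/subsetP: Hu; apply.
    apply/subsetP => a Ha; apply/bigcupP.
    move: (Ha); rewrite inE => /andP [Hpa Hax].
    have Hne : a != x.
      apply/negP => /eqP Hax'; subst a; move: Hx; rewrite inE Hpa //.
    have [w Haw Hwx] := last_step T e Hax Hne.
    exists (Pl e w); first by apply/imsetP; exists w => //; rewrite inE.
    by rewrite inE Hpa.
  + apply/trivIsetP => A B /imsetP [u Hu ->] /imsetP [v Hv ->] Hneq.
    have Huv : u != v by apply/negP => /eqP E; move: Hneq; rewrite E eqxx.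
    rewrite -setI_eq0; apply/eqP/setP => a; rewrite !inE.
    apply/negP => /andP [/andP [_ Hau] /andP [_ Hav]].
    rewrite !inE in Hu Hv.
    exact: (two_in T e func noloop Hu Hv Huv Hau Hav).
  + apply/imsetP => [[u _ H]]; move: (nonempty u); by rewrite -H eqxx.
Qed.
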